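(* Let $i\in\{2,\dots,n\}$ and let $j\in\{1,\dots,i-1\}$ be the index of the disk that eliminates $D_i$, i.e., $t_i=t(i,j)$. Then \[ d\big(\nu(D_i^{t_i}),\nu(D_j^{t_i})\big)\le 2\big(|\nu(D_i^{t_i})|+|\nu(D_j^{t_i})|\big) \] and \[ \frac{1}{4\Delta}\le \frac{|\nu(D_i^{t_i})|}{|\nu(D_j^{t_i})|}\le 4\Delta. \]
   Context: Growing prioritized disks: centers $p_1,\dots,p_n\in[0,1]^2$ (pairwise distinct) and growth rates $v_1,\dots,v_n>0$; at time $t\ge0$ the disk $D_i^t$ is centered at $p_i$ with radius $tv_i$. Smaller index means higher priority; $t(i,j)=|p_ip_j|/(v_i+v_j)$. Whenever $D_i,D_j$ with $i<j$ touch at time $t(i,j)$ and neither has been removed before, $D_j$ is removed and $D_i$ keeps growing; $t_i$ is the time $D_i$ is removed ($t_1=\infty$); all $t(i,j)$ are pairwise distinct. $\Delta=\max_i v_i/\min_j v_j$. Quadtree $\mathcal{Q}$: a rooted tree in which each internal node has four children and each node $\nu$ has a square cell $b(\nu)$; the root cell is $[0,1]^2$ and a node's cell is split into four congruent quadrants giving its children's cells; subdivision stops when each cell at the bottom level contains at most one disk center and any cell containing a disk center is surrounded by two layers of empty cells. $|\nu|$ is the diameter of $b(\nu)$, and $d(\nu,\nu')$ is the smallest distance between a point of $b(\nu)$ and a point of $b(\nu')$. The disk $D_i^t$ occupies node $\nu$ if (i) $p_i\in b(\nu)$, (ii) $\nu$ is a leaf or $b(\nu)\subseteq D_i^t$,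 and (iii) $D_i$ has not been eliminated by time $t$. $\nu(D_i^t)$ denotes the node with the largest cell of $\mathcal{Q}$ that is occupied by $D_i^t$. *)

(* Defs.v *)
From Stdlib Require Import Reals Lra Lia ZArith List.
From Coquelicot Require Import Coquelicot.
Open Scope R_scope.

Definition pt := (R * R)%type.

Definition dist (q r : pt) : R :=
  sqrt ((fst q - fst r) ^ 2 + (snd q - snd r) ^ 2).

(* Disks are indexed 1..n (smaller index = higher priority).
   t(i,j) = |p_i p_j| / (v_i + v_j). *)
Definition tij (p : nat -> pt) (v : nat -> R) (i j : nat) : R :=
  dist (p i) (p j) / (v i + v j).

Definition vmax (n : nat) (v : nat -> R) : R := fold_right Rmax (v 1%nat) (map v (seq 1 n)).
Definition vmin (n : nat) (v : nat -> R) : R := fold_right Rmin (v 1%nat) (map v (seq 1 n)).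
Definition DeltaV (n : nat) (v : nat -> R) : R := vmax n v / vmin n v.

(* Elimination times of the process: T k is t_k (p_infty = never removed).
   t_1 = oo; for 2 <= j <= n, D_j is removed at the first time t(i,j), i < j,
   at which D_i (the higher-priority disk) has not yet been removed, i.e.
   t_j = min { t(i,j) | 1 <= i < j, t(i,j) < t_i }. *)
Definition is_elim (p : nat -> pt) (v : nat -> R) (n : nat) (T : nat -> Rbar) : Prop :=
  T 1%nat = p_infty /\
  forall j, (2 <= j <= n)%nat ->
    exists i, (1 <= i < j)%nat /\ Rbar_lt (Finite (tij p v i j)) (T i) /\
      T j = Finite (tij p v i j) /\
      forall i', (1 <= i' < j)%nat -> Rbar_lt (Finite (tij p v i' j)) (T i') ->
        tij p v i j <= tij p v i' j.

(* Quadtree nodes: a node at level k (depth k) with cell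
   [a/2^k,(a+1)/2^k] x [b/2^k,(b+1)/2^k]. *)
Record node := Node { lvl : nat; ax : Z; ay : Z }.

Definition in_cell (nd : node) (q : pt) : Prop :=
  IZR (ax nd) / 2 ^ lvl nd <= fst q <= (IZR (ax nd) + 1) / 2 ^ lvl nd /\
  IZR (ay nd) / 2 ^ lvl nd <= snd q <= (IZR (ay nd) + 1) / 2 ^ lvl nd.

Definition cell_diam (nd : node) : R := sqrt 2 / 2 ^ lvl nd.

Definition cell_dist (n1 n2 : node) : Rbar :=
  Glb_Rbar (fun r => exists q1 q2, in_cell n1 q1 /\ in_cell n2 q2 /\ r = dist q1 q2).

(* Index (along one axis) of the level-k cell that a coordinate x in [0,1]
   is assigned to (floor(x 2^k), with x = 1 assigned to the last cell). *)
Definition cidx (k : nat) (x : R) : Z :=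
  Z.min (Int_part (x * 2 ^ k)) (2 ^ (Z.of_nat k) - 1)%Z.

(* Stopping condition of the subdivision at level L (the bottom level):
   every level-L cell contains at most one disk center, and every cell
   containing a center is surrounded by two layers of empty cells. *)
Definition qt_stop (p : nat -> pt) (n L : nat) : Prop :=
  (forall k1 k2, (1 <= k1 <= n)%nat -> (1 <= k2 <= n)%nat ->
     cidx L (fst (p k1)) = cidx L (fst (p k2)) ->
     cidx L (snd (p k1)) = cidx L (snd (p k2)) -> k1 = k2) /\
  (forall k1 k2, (1 <= k1 <= n)%nat -> (1 <= k2 <= n)%nat ->
     (cidx L (fst (p k1)), cidx L (snd (p k1))) <>
     (cidx L (fst (p k2)), cidx L (snd (p k2))) ->
     (2 < Z.abs (cidx L (fst (p k1)) - cidx L (fst (p k2))) \/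
      2 < Z.abs (cidx L (snd (p k1)) - cidx L (snd (p k2))))%Z).

(* D_i^t occupies node nd: (i) p_i in b(nd), (ii) nd is a leaf (level L)
   or b(nd) is contained in D_i^t, (iii) D_i not eliminated before t. *)
Definition occupies (p : nat -> pt) (v : nat -> R) (T : nat -> Rbar) (L i : nat)
    (t : R) (nd : node) : Prop :=
  (lvl nd <= L)%nat /\
  ax nd = cidx (lvl nd) (fst (p i)) /\ ay nd = cidx (lvl nd) (snd (p i)) /\
  (lvl nd = L \/ forall q, in_cell nd q -> dist q (p i) <= t * v i) /\
  Rbar_le (Finite t) (T i).

Definition is_nu (p : nat -> pt) (v : nat -> R) (T : nat -> Rbar) (L i : nat)
    (t : R) (nd : node) : Prop :=
  occupies p v T L i t nd /\
  forall nd', occupies p v T L i t nd' -> cell_diam nd' <= cell_diam nd.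

(* Main.v *)
From Pilot Require Import Defs.
From Stdlib Require Import Reals ZArith List Lra Lia Classical.
From Coquelicot Require Import Coquelicot.
Import Pilot.Defs.
Open Scope R_scope.

Lemma pow2_pos k : 0 < 2 ^ k.
Proof. apply pow_lt; lra. Qed.

Lemma cidx_ok k x : 0 <= x <= 1 ->
  IZR (cidx k x) / 2 ^ k <= x <= (IZR (cidx k x) + 1) / 2 ^ k.
Proof.
  intros Hx. pose proof (pow2_pos k) as HP.
  assert (HM : IZR (2 ^ Z.of_nat k - 1) = 2 ^ k - 1).
  { rewrite minus_IZR, <- pow_IZR. reflexivity. }
  assert (H : IZR (cidx k x) <= x * 2 ^ k <= IZR (cidx k x) + 1).
  { unfold cidx. destruct (base_Int_part (x * 2 ^ k)) as [H1 H2].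
    destruct (Z.min_spec (Int_part (x * 2 ^ k)) (2 ^ Z.of_nat k - 1)%Z) as [[Ha Hb]|[Ha Hb]];
      rewrite Hb.
    - lra.
    - rewrite HM. apply IZR_le in Ha. rewrite HM in Ha. nra. }
  split.
  - apply (Rmult_le_reg_r (2 ^ k)); [lra|]. unfold Rdiv. rewrite Rmult_assoc, Rinv_l; lra.
  - apply (Rmult_le_reg_r (2 ^ k)); [lra|]. unfold Rdiv. rewrite Rmult_assoc, Rinv_l; lra.
Qed.

Lemma sqrt_le_b X b : 0 <= b -> X <= b * b -> sqrt X <= b.
Proof. intros Hb HX. rewrite <- (sqrt_square b) by exact Hb. now apply sqrt_le_1_alt. Qed.

Lemma b_le_sqrt X b : 0 <= b -> b * b <= X -> b <= sqrt X.
Proof. intros Hb HX. rewrite <- (sqrt_square b) at 1 by exact Hb. now apply sqrt_le_1_alt. Qed.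

Lemma same_cell nd q1 q2 : in_cell nd q1 -> in_cell nd q2 -> dist q1 q2 <= cell_diam nd.
Proof.
  unfold in_cell, dist, cell_diam. pose proof (pow2_pos (lvl nd)) as HP.
  set (P := 2 ^ lvl nd) in *. set (a := IZR (ax nd)). set (b := IZR (ay nd)).
  unfold Rdiv. set (w := / P). assert (Hw : 0 < w) by (apply Rinv_0_lt_compat; lra).
  intros [[A1 A2] [A3 A4]] [[B1 B2] [B3 B4]].
  pose proof (sqrt_sqrt 2) as S2. pose proof (sqrt_lt_R0 2) as S0.
  apply sqrt_le_b. { apply Rmult_le_pos; lra. }
  replace (sqrt 2 * w * (sqrt 2 * w)) with ((sqrt 2 * sqrt 2) * (w * w)) by ring.
  rewrite S2 by lra. nra.
Qed.

Lemma far_corner nd q r : (forall c, in_cell nd c -> dist c q <= r) -> cell_diam nd <= 2 * r.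
Proof.
  intros H. unfold in_cell, cell_diam in *. pose proof (pow2_pos (lvl nd)) as HP.
  set (P := 2 ^ lvl nd) in *. set (a := IZR (ax nd)) in *. set (b := IZR (ay nd)) in *.
  unfold Rdiv in *. set (w := / P) in *. assert (Hw : 0 < w) by (apply Rinv_0_lt_compat; lra).
  set (cx := if Rle_dec (fst q) (a * w + w / 2) then (a + 1) * w else a * w).
  set (cy := if Rle_dec (snd q) (b * w + w / 2) then (b + 1) * w else b * w).
  assert (Hx : a * w <= cx <= (a + 1) * w /\ w / 2 <= Rabs (cx - fst q)).
  { unfold cx; destruct (Rle_dec (fst q) (a * w + w / 2)) as [Hr|Hr]; [|apply Rnot_le_lt in Hr];
    (split; [split; lra | unfold Rabs; destruct Rcase_abs; lra]). }
  assert (Hy : b * w <= cy <= (b + 1) * w /\ w / 2 <= Rabs (cy - snd q)).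
  { unfold cy; destruct (Rle_dec (snd q) (b * w + w / 2)) as [Hr|Hr]; [|apply Rnot_le_lt in Hr];
    (split; [split; lra | unfold Rabs; destruct Rcase_abs; lra]). }
  specialize (H (cx, cy)). simpl in H.
  assert (Hd : sqrt 2 * w / 2 <= dist (cx, cy) q).
  { unfold dist; cbn [fst snd]. pose proof (sqrt_sqrt 2) as S2. pose proof (sqrt_lt_R0 2) as S0.
    apply b_le_sqrt. { apply Rmult_le_pos; [apply Rmult_le_pos|]; lra. }
    replace (sqrt 2 * w / 2 * (sqrt 2 * w / 2)) with ((sqrt 2 * sqrt 2) * (w * w) / 4) by field.
    rewrite S2 by lra.
    destruct Hx as [_ Hx]; destruct Hy as [_ Hy].
    assert (E1: (cx - fst q) ^ 2 = Rabs (cx - fst q) * Rabs (cx - fst q)).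
    { rewrite <- Rabs_mult. simpl. rewrite Rmult_1_r. rewrite Rabs_right; [ring|].
      apply Rle_ge, Rle_0_sqr. }
    assert (E2: (cy - snd q) ^ 2 = Rabs (cy - snd q) * Rabs (cy - snd q)).
    { rewrite <- Rabs_mult. simpl. rewrite Rmult_1_r. rewrite Rabs_right; [ring|].
      apply Rle_ge, Rle_0_sqr. }
    rewrite E1, E2. nra. }
  assert (dist (cx, cy) q <= r) by (apply H; lra).
  lra.
Qed.

Lemma diam_pos nd : 0 < cell_diam nd.
Proof. unfold cell_diam. apply Rdiv_lt_0_compat; [apply sqrt_lt_R0; lra | apply pow2_pos]. Qed.

Lemma diam_mono n1 n2 : (lvl n1 <= lvl n2)%nat -> cell_diam n2 <= cell_diam n1.
Proof.
  intros H. unfold cell_diam, Rdiv. apply Rmult_le_compat_l.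
  - left; apply sqrt_lt_R0; lra.
  - apply Rinv_le_contravar; [apply pow2_pos|]. apply Rle_pow; [lra|exact H].
Qed.

Lemma diam_le_root nd : cell_diam nd <= sqrt 2.
Proof.
  unfold cell_diam, Rdiv. pose proof (sqrt_lt_R0 2). 
  assert (1 <= 2 ^ lvl nd) by (apply pow_R1_Rle; lra).
  assert (/ 2 ^ lvl nd <= 1).
  { rewrite <- Rinv_1. apply Rinv_le_contravar; lra. }
  assert (0 < sqrt 2) by (apply sqrt_lt_R0; lra). nra.
Qed.

Lemma diam0 nd : lvl nd = 0%nat -> cell_diam nd = sqrt 2.
Proof. intros H. unfold cell_diam. rewrite H. simpl. field. Qed.

Lemma nu_props p v T L a t nd :
  0 <= fst (p a) <= 1 /\ 0 <= snd (p a) <= 1 -> is_nu p v T L a t nd ->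
  in_cell nd (p a) /\ (lvl nd <= L)%nat /\
  (lvl nd = 0%nat \/ t * v a < 2 * cell_diam nd) /\
  (lvl nd = L \/ cell_diam nd <= 2 * (t * v a)).
Proof.
  intros [Hx Hy] [[HL [Hax [Hay [Hin Halive]]]] Hmax].
  assert (Hc : in_cell nd (p a)).
  { unfold in_cell. rewrite Hax, Hay. split; apply cidx_ok; assumption. }
  split; [exact Hc|]. split; [exact HL|]. split.
  - destruct (lvl nd) as [|m] eqn:El; [left; reflexivity|right].
    set (nd' := Node m (cidx m (fst (p a))) (cidx m (snd (p a)))).
    assert (Hc' : in_cell nd' (p a)).
    { unfold in_cell, nd'; simpl. split; apply cidx_ok; assumption. }
    assert (Hd' : cell_diam nd' = 2 * cell_diam nd).
    { unfold cell_diam, nd'. simpl. rewrite El. simpl. field. apply Rgt_not_eq, pow2_pos. }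
    destruct (classic (forall q, in_cell nd' q -> dist q (p a) <= t * v a)) as [Hall|Hnot].
    + exfalso. assert (occupies p v T L a t nd') as Ho.
      { unfold occupies, nd'; simpl. repeat split; try reflexivity; try lia; auto. }
      specialize (Hmax _ Ho). pose proof (diam_pos nd). lra.
    + apply not_all_ex_not in Hnot. destruct Hnot as [q Hq].
      apply imply_to_and in Hq. destruct Hq as [Hq1 Hq2]. apply Rnot_le_lt in Hq2.
      pose proof (same_cell nd' q (p a) Hq1 Hc'). lra.
  - destruct Hin as [Hin|Hin]; [left; exact Hin|right].
    apply (far_corner nd (p a)). exact Hin.
Qed.

Lemma fold_max_ge l x0 y : In y l -> y <= fold_right Rmax x0 l.
Proof.
  induction l as [|z l IH]; simpl; [tauto|].
  intros [->|H]; [apply Rmax_l|]. eapply Rle_trans; [apply IH; exact H| apply Rmax_r].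
Qed.
Lemma fold_max_init l x0 : x0 <= fold_right Rmax x0 l.
Proof. induction l as [|z l IH]; simpl; [lra|]. eapply Rle_trans; [exact IH|apply Rmax_r]. Qed.
Lemma fold_min_le l x0 y : In y l -> fold_right Rmin x0 l <= y.
Proof.
  induction l as [|z l IH]; simpl; [tauto|].
  intros [->|H]; [apply Rmin_l|]. eapply Rle_trans; [apply Rmin_r| apply IH; exact H].
Qed.
Lemma fold_min_init l x0 : fold_right Rmin x0 l <= x0.
Proof. induction l as [|z l IH]; simpl; [lra|]. eapply Rle_trans; [apply Rmin_r|exact IH]. Qed.
Lemma fold_min_pos l x0 : 0 < x0 -> (forall y, In y l -> 0 < y) -> 0 < fold_right Rmin x0 l.
Proof.
  intros H0. induction l as [|z l IH]; simpl; intros H; [lra|].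
  apply Rmin_glb_lt; [apply H; left; reflexivity|apply IH; intros; apply H; right; assumption].
Qed.

Lemma ratio_aux da db va vb t D : 0 < da -> 0 < db -> 0 < va -> 0 < vb -> 1 <= D ->
  va <= D * vb -> (da <= db \/ da <= 2 * (t * va)) -> (da <= db \/ t * vb < 2 * db) ->
  da <= 4 * D * db.
Proof.
  intros Ha Hb Hva Hvb HD Hv [H1|H1]; [nra|]. intros [H2|H2]; [nra|].
  assert (0 < t) by nra.
  assert (t * va <= t * (D * vb)) by (apply Rmult_le_compat_l; lra).
  nra.
Qed.

Lemma unit_dist q r : 0 <= fst q <= 1 /\ 0 <= snd q <= 1 -> 0 <= fst r <= 1 /\ 0 <= snd r <= 1 ->
  dist q r <= sqrt 2.
Proof.
  intros Hq Hr. rewrite <- (diam0 (Node 0 0 0)) by reflexivity.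
  apply same_cell; unfold in_cell; simpl; lra.
Qed.

Theorem lemma10 (n : nat) (p : nat -> pt) (v : nat -> R) (T : nat -> Rbar)
    (L i j : nat) (ni nj : node) :
  (forall k, (1 <= k <= n)%nat -> 0 <= fst (p k) <= 1 /\ 0 <= snd (p k) <= 1) ->
  (forall k l, (1 <= k <= n)%nat -> (1 <= l <= n)%nat -> k <> l -> p k <> p l) ->
  (forall k, (1 <= k <= n)%nat -> 0 < v k) ->
  (forall a b c d, (1 <= a < b)%nat -> (b <= n)%nat -> (1 <= c < d)%nat -> (d <= n)%nat ->
     (a, b) <> (c, d) -> tij p v a b <> tij p v c d) ->
  is_elim p v n T ->
  qt_stop p n L -> (forall k, (k < L)%nat -> ~ qt_stop p n k) ->
  (2 <= i <= n)%nat -> (1 <= j <= i - 1)%nat ->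
  T i = Finite (tij p v i j) ->
  is_nu p v T L i (tij p v i j) ni ->
  is_nu p v T L j (tij p v i j) nj ->
  Rbar_le (cell_dist ni nj) (Finite (2 * (cell_diam ni + cell_diam nj))) /\
  1 / (4 * DeltaV n v) <= cell_diam ni / cell_diam nj <= 4 * DeltaV n v.
Proof.
  intros Hbox _ Hv _ _ _ _ Hi Hj _ Hnui Hnuj.
  set (t := tij p v i j) in *.
  assert (Hki : (1 <= i <= n)%nat) by lia. assert (Hkj : (1 <= j <= n)%nat) by lia.
  pose proof (Hv i Hki) as Hvi. pose proof (Hv j Hkj) as Hvj.
  pose proof (Hbox i Hki) as Hbi. pose proof (Hbox j Hkj) as Hbj.
  assert (Hdist : dist (p i) (p j) = t * v i + t * v j).
  { unfold t, tij. field. lra. }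
  destruct (nu_props p v T L i t ni Hbi Hnui) as [Ci [Li [Ai Bi]]].
  destruct (nu_props p v T L j t nj Hbj Hnuj) as [Cj [Lj [Aj Bj]]].
  pose proof (diam_pos ni) as Pi. pose proof (diam_pos nj) as Pj.
  split.
  - unfold cell_dist.
    set (S := fun r => exists q1 q2, in_cell ni q1 /\ in_cell nj q2 /\ r = dist q1 q2).
    destruct (Glb_Rbar_correct S) as [Hlb _].
    assert (HS : S (dist (p i) (p j))) by (exists (p i), (p j); auto).
    specialize (Hlb _ HS).
    eapply Rbar_le_trans; [exact Hlb|]. simpl.
    pose proof (unit_dist (p i) (p j) Hbi Hbj) as Hu.
    destruct Ai as [Ai|Ai].
    + rewrite (diam0 ni Ai) in *. lra.
    + destruct Aj as [Aj|Aj].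
      * rewrite (diam0 nj Aj) in *. lra.
      * lra.
  - set (l := map v (seq 1 n)).
    assert (Hin : forall k, (1 <= k <= n)%nat -> In (v k) l).
    { intros k Hk. unfold l. apply in_map. apply in_seq. lia. }
    assert (Hmin : 0 < vmin n v).
    { unfold vmin. fold l. apply fold_min_pos; [apply Hv; lia|].
      intros y Hy. unfold l in Hy. apply in_map_iff in Hy. destruct Hy as [k [<- Hk]].
      apply in_seq in Hk. apply Hv. lia. }
    assert (Hle : forall k, (1 <= k <= n)%nat -> vmin n v <= v k <= vmax n v).
    { intros k Hk. split; [apply fold_min_le | apply fold_max_ge]; apply Hin; exact Hk. }
    assert (HD1 : 1 <= DeltaV n v).
    { unfold DeltaV. apply Rle_div_r; [lra|]. rewrite Rmult_1_l.
      pose proof (Hle 1%nat ltac:(lia)). lra. }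
    assert (Hratio : forall a b, (1 <= a <= n)%nat -> (1 <= b <= n)%nat -> v a <= DeltaV n v * v b).
    { intros a b Ha Hb. unfold DeltaV. pose proof (Hle a Ha). pose proof (Hle b Hb).
      set (M := vmax n v) in *. set (m := vmin n v) in *.
      assert (E : M / m * m = M) by (field; lra).
      assert (0 <= M / m) by (unfold Rdiv; apply Rmult_le_pos; [lra| left; apply Rinv_0_lt_compat; lra]).
      nra. }
    assert (R1 : cell_diam ni <= 4 * DeltaV n v * cell_diam nj).
    { apply (ratio_aux _ _ (v i) (v j) t); try lra; [apply Hratio; assumption| |].
      - destruct Bi as [Bi|Bi]; [left; apply diam_mono; lia|right; exact Bi].
      - destruct Aj as [Aj|Aj]; [left; rewrite (diam0 nj Aj); apply diam_le_root|right; exact Aj]. }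
    assert (R2 : cell_diam nj <= 4 * DeltaV n v * cell_diam ni).
    { apply (ratio_aux _ _ (v j) (v i) t); try lra; [apply Hratio; assumption| |].
      - destruct Bj as [Bj|Bj]; [left; apply diam_mono; lia|right; exact Bj].
      - destruct Ai as [Ai|Ai]; [left; rewrite (diam0 ni Ai); apply diam_le_root|right; exact Ai]. }
    split.
    + apply (Rle_div_r (1 / (4 * DeltaV n v)) (cell_diam ni) (cell_diam nj)); [lra|].
      replace (1 / (4 * DeltaV n v) * cell_diam nj) with (cell_diam nj / (4 * DeltaV n v)) by (field; lra).
      apply Rle_div_l; [lra|]. lra.
    + apply Rle_div_l; lra.
Qed.
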